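(* The strong substitutes property is not sufficient to guarantee that a Walrasian equilibrium on the original items is a price-match equilibrium: there exists a combinatorial auction in which every bidder's valuation satisfies the strong substitutes property and a Walrasian equilibrium on the original items exists, but no Walrasian equilibrium on the original items is a price-match equilibrium.
   Context: Combinatorial auction: item types $j$ with supply $c_j\in\mathbb Z_{\ge1}$; bidders $\mathcal I$ with valuations $v_i$ on bundles $a\in\mathbb Z^J_{\ge0}$, $a\le c$ (normalized, monotone), expressed as bids (bundle, amount) with at most one accepted bid per bidder; bids are truthful. A feasible allocation assigns disjoint-supply-respecting bundles; $x^*$ is an efficient allocation with bundles $a^{i*}$. Linear prices $p\in\mathbb R^J_{\ge0}$; a Walrasian equilibrium on the original items (no artificial items) is $(x^*,p)$ such that each bidder's bundle $a^{i*}$ maximizes $v_i(a)-p\,a$ over bundles, and $p_j=0$ for any item in excess supply under $x^*$. It is a price-match equilibrium if for every bidder $i$ there is a feasible allocation of bundles to the other bidders (one accepted bid each) such that each of them has value at least the price of her bundle, and the total price of the allocated bundles equals $\sum_{i}p\,a^{i*}$. A valuation satisfies gross substitutes (for unique items) if for price vectors $p\le q$ and any $S$ in the demand set at $p$ there is $T$ in the demand set at $q$ containing every $j\in S$ with $p_j=q_j$; it satisfies strong substitutes if it satisfies gross substitutes when every unit of every item type is treated as a distinct item. *)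

(* Defs.v *)
From HB Require Import structures.
From mathcomp Require Import all_boot all_order all_algebra.
From mathcomp Require Import reals.
Set Implicit Arguments. Unset Strict Implicit. Unset Printing Implicit Defensive.
Import Order.TTheory GRing.Theory Num.Theory.
Local Open Scope ring_scope.

Section Auction.
Variable R : realType.

Definition set_demand (U : finType) (v : {set U} -> R) (q : U -> R) (S : {set U}) :=
  forall T : {set U}, v T - \sum_(u in T) q u <= v S - \sum_(u in S) q u.

Definition gross_substitutes (U : finType) (v : {set U} -> R) :=
  forall q q' : U -> R, (forall u, 0 <= q u) -> (forall u, q u <= q' u) ->
  forall S, set_demand v q S ->
  exists T, set_demand v q' T /\ (forall u, u \in S -> q u = q' u -> u \in T).

Variable J : finType.
Variable c : J -> nat.

Definition bundle := {ffun J -> nat}.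
Definition bundle_le (a b : bundle) := forall j, (a j <= b j)%N.
Definition bundle_leb (a b : bundle) : bool := [forall j, (a j <= b j)%N].
Definition cap : bundle := [ffun j => c j].
Definition zero_bundle : bundle := [ffun _ => 0%N].

(* Units: each unit of each item type treated as a distinct item. *)
Definition unit_item := {j : J & 'I_(c j)}.
Definition count_bundle (S : {set unit_item}) : bundle :=
  [ffun j => #|[set u in S | tag u == j]|].

Definition strong_substitutes (v : bundle -> R) :=
  gross_substitutes (fun S : {set unit_item} => v (count_bundle S)).

Definition price (p : J -> R) (a : bundle) : R := \sum_j p j * (a j)%:R.

Variable I : finType.
Variable bids : I -> seq (bundle * R).

(* XOR valuation expressed by the bids (at most one accepted bid). *)
Definition xorval (i : I) (a : bundle) : R :=
  \big[Num.max/0]_(bx <- bids i | bundle_leb bx.1 a) bx.2.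

Definition well_formed_auction :=
  (forall j, (0 < c j)%N) /\
  (forall i bx, bx \in bids i -> bundle_le bx.1 cap) /\
  (forall i, xorval i zero_bundle = 0) /\
  (forall i a b, bundle_le a b -> xorval i a <= xorval i b) /\
  (forall i bx, bx \in bids i -> xorval i bx.1 = bx.2).

Definition feasible (x : I -> bundle) := forall j, (\sum_i x i j <= c j)%N.

Definition welfare (x : I -> bundle) : R := \sum_i xorval i (x i).

Definition efficient (x : I -> bundle) :=
  feasible x /\ forall y, feasible y -> welfare y <= welfare x.

Definition walrasian_eq (x : I -> bundle) (p : J -> R) :=
  efficient x /\ (forall j, 0 <= p j) /\
  (forall i a, bundle_le a cap ->
     xorval i a - price p a <= xorval i (x i) - price p (x i)) /\
  (forall j, (\sum_i x i j < c j)%N -> p j = 0).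

Definition price_match (x : I -> bundle) (p : J -> R) :=
  forall i, exists y : I -> bundle,
    feasible y /\ y i = zero_bundle /\
    (forall k, k != i ->
       (y k = zero_bundle \/ exists amt, (y k, amt) \in bids k) /\
       price p (y k) <= xorval k (y k)) /\
    \sum_k price p (y k) = \sum_k price p (x k).

End Auction.

(* Main.v *)
Set Warnings "-all".
Require Import Defs.
From HB Require Import structures.
From mathcomp Require Import all_boot all_order all_algebra.
From mathcomp Require Import reals.
From mathcomp Require Import lra zify.

Import Order.TTheory GRing.Theory Num.Theory.
Local Open Scope ring_scope.

Section G.
Variable R : realType.

Lemma demand_exists (U : finType) (v : {set U} -> R) q : exists T, set_demand v q T.
Proof.
case: (@arg_maxP _ _ {set U} set0 predT (fun S => v S - \sum_(u in S) q u) erefl).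
move=> T _ HT; exists T => T'; exact: HT.
Qed.

Lemma GS_ext (U : finType) (v w : {set U} -> R) : (forall S, v S = w S) ->
  gross_substitutes v -> gross_substitutes w.
Proof.
move=> E G q q' q0 qq' S HS.
have HS' : set_demand v q S by move=> T; rewrite !E; exact: HS.
have [T [HT1 HT2]] := G q q' q0 qq' S HS'.
by exists T; split => // T'; rewrite -!E; exact: HT1.
Qed.

Lemma sum_le_pos (U : finType) (A : {set U}) (f : U -> R) :
  \sum_(u in A) f u <= \sum_(u in [set u | 0 <= f u]) f u.
Proof.
rewrite [X in X <= _]big_mkcond [X in _ <= X]big_mkcond /=.
apply: ler_sum => u _; rewrite inE.
case: (u \in A); case: (boolP (0 <= f u)) => // h.
by rewrite -ltNge in h; rewrite ltW.
Qed.

Lemma GS_add (U : finType) (a : R) : gross_substitutes (fun S : {set U} => \sum_(u in S) a).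
Proof.
move=> q q' q0 qq' S HS.
have E : forall (T : {set U}) (r : U -> R), \sum_(u in T) a - \sum_(u in T) r u = \sum_(u in T) (a - r u).
  by move=> T r; rewrite sumrB.
exists [set u | 0 <= a - q' u]; split.
  by move=> T; rewrite !E; apply: sum_le_pos.
move=> u uS equ; rewrite inE -equ.
have := HS (S :\ u); rewrite !E (big_setD1 u uS) /=.
by rewrite -subr_ge0 addrK.
Qed.

Lemma GS_unit (U : finType) (b : R) :
  gross_substitutes (fun S : {set U} => if S == set0 then 0 else b).
Proof.
move=> q q' q0 qq' S HS.
set Seq := [set u in S | q u == q' u].
case: (eqVneq Seq set0) => [Se|Sne].
  have [T HT] := @demand_exists _ (fun S : {set U} => if S == set0 then 0 else b) q'.
  exists T; split => // u uS equ.
  have : u \in Seq by rewrite inE uS equ eqxx.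
  by rewrite Se inE.
exists Seq; split => // ; last by move=> u uS equ; rewrite inE uS equ eqxx.
move=> T.
have SsubS : Seq \subset S by apply/subsetP => u; rewrite inE => /andP[].
have Sn : S != set0.
  apply: contraNneq Sne => S0; apply/eqP; apply/setP => u; rewrite inE S0 inE //.
apply: (le_trans (y := (if T == set0 then 0 else b) - \sum_(u in T) q u)).
  by rewrite lerB // ler_sum.
apply: (le_trans (HS T)).
rewrite (negbTE Sne) (negbTE Sn) lerB //.
rewrite [X in _ <= X](big_setID Seq) /=.
have -> : S :&: Seq = Seq by apply/setIidPr.
have -> : \sum_(i in Seq) q' i = \sum_(i in Seq) q i.
  by apply: eq_bigr => u; rewrite inE => /andP[_ /eqP].
by rewrite lerDl sumr_ge0.
Qed.
End G.

Definition bn (k : nat) : bundle unit := [ffun _ => k].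
Definition cc : unit -> nat := fun _ => 2%N.
Definition bids0 (R : realType) : bool -> seq (bundle unit * R) :=
  fun i => if i then [:: (bn 1, 2%:R); (bn 2, 4%:R)] else [:: (bn 1, 1)].

Lemma leb_bn k (a : bundle unit) : bundle_leb (bn k) a = (k <= a tt)%N.
Proof.
apply/forallP/idP => [/(_ tt)|h []]; by rewrite ffunE.
Qed.

Lemma nmax_r (R : realType) (x y : R) : x <= y -> Num.max x y = y.
Proof. by move=> h; rewrite /Num.max; case: ifP => // /negbT; rewrite -leNgt => h'; apply/le_anti; rewrite h h'. Qed.
Lemma nmax_l (R : realType) (x y : R) : y <= x -> Num.max x y = x.
Proof. by move=> h; rewrite /Num.max; case: ifP => // h'; apply/le_anti; rewrite h (ltW h'). Qed.

Lemma xor_true (R : realType) a : xorval (bids0 R) true a = (2 * minn (a tt) 2)%N%:R.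
Proof.
rewrite /xorval /= !big_cons big_nil !leb_bn /=.
case: (a tt) => [|[|n]] /=.
- by [].
- rewrite (_ : (2 * minn 1 2 = 2)%N) //.
  rewrite (@nmax_l _ 2 0) //; lra.
- rewrite (_ : (2 * minn n.+2 2 = 4)%N); last by lia.
  rewrite (@nmax_l _ 4 0) ?nmax_r //; lra.
Qed.

Lemma xor_false (R : realType) a : xorval (bids0 R) false a = (minn (a tt) 1)%N%:R.
Proof.
rewrite /xorval /= !big_cons big_nil !leb_bn /=.
case: (a tt) => [|n] /=.
- by [].
- rewrite (_ : (minn n.+1 1 = 1)%N); last by lia.
  rewrite (@nmax_l _ 1 0) //; lra.
Qed.

Lemma card_ui : #|{: unit_item cc}| = 2%N.
Proof. rewrite card_tagged (@eq_map _ _ _ (fun _ => 2%N)); last by move=> i; rewrite card_ord. by rewrite enumT unlock. Qed.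

Lemma count_tt (S : {set unit_item cc}) : count_bundle S tt = #|S|.
Proof.
rewrite ffunE; apply: eq_card => u; rewrite inE.
by case: (tag u); rewrite eqxx andbT.
Qed.

Lemma price_tt (R : realType) (p : unit -> R) a : price p a = p tt * (a tt)%:R.
Proof. by rewrite /price (big_pred1 tt) //; case. Qed.

Lemma sum_bool (R : realType) (F : bool -> R) : \sum_(i : bool) F i = F true + F false.
Proof. by rewrite big_bool. Qed.

Theorem corollary4 (R : realType) :
  exists (J I : finType) (c : J -> nat) (bids : I -> seq (bundle J * R)),
    well_formed_auction c bids /\
    (forall i, strong_substitutes c (xorval bids i)) /\
    (exists x p, walrasian_eq c bids x p) /\
    (forall x p, walrasian_eq c bids x p -> ~ price_match c bids x p).
Proof.
exists unit, bool, cc, (bids0 R).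
set x0 : bool -> bundle unit := fun i => if i then bn 2 else bn 0.
have Fx0 : feasible cc x0 by move=> j; rewrite big_bool /= !ffunE.
have Wx0 : welfare (bids0 R) x0 = 4%:R.
  by rewrite /welfare sum_bool xor_true xor_false !ffunE -natrD.
split; [|split; [|split]].
- split; first by [].
  split.
    move=> [] bx; rewrite /bids0 !inE; [move=> /orP[]/eqP -> | move=> /eqP ->];
      by move=> j; rewrite !ffunE.
  split; first by case; rewrite ?xor_true ?xor_false ffunE.
  split.
    move=> [] a b h; rewrite ?xor_true ?xor_false ler_nat; have := h tt; lia.
  move=> [] bx; rewrite /bids0 !inE; [move=> /orP[]/eqP -> | move=> /eqP ->];
    by rewrite /= ?xor_true ?xor_false ffunE.
- case; rewrite /strong_substitutes.
    apply: (@GS_ext R _ (fun S => \sum_(u in S) 2)); last exact: GS_add.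
    move=> S; rewrite xor_true count_tt sumr_const.
    have hS : (#|S| <= 2)%N by rewrite -card_ui max_card.
    rewrite (_ : minn #|S| 2 = #|S|); last by lia.
    by rewrite natrM mulr_natr.
  apply: (@GS_ext R _ (fun S => if S == set0 then 0 else 1)); last exact: GS_unit.
  move=> S; rewrite xor_false count_tt.
  case: (eqVneq S set0) => [->|h]; first by rewrite cards0.
  rewrite (_ : minn #|S| 1 = 1%N) //.
  have : (0 < #|S|)%N by rewrite card_gt0.
  lia.
- exists x0, (fun _ => 1); split; [|split; [|split]].
  + split => // y Fy; rewrite Wx0 /welfare sum_bool xor_true xor_false -natrD ler_nat.
    have := Fy tt; rewrite big_bool /= /cc; lia.
  + by move=> _; apply: ler01.
  + move=> [] a ha; rewrite ?xor_true ?xor_false !price_tt !mul1r /x0 !ffunE;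
      have := ha tt; rewrite ffunE /cc => hh.
      have k : (2 * minn (a tt) 2 = 2 * a tt)%N by lia.
      have ha2 : (a tt)%:R <= 2%:R :> R by rewrite ler_nat.
      rewrite k natrM (_ : (2 * minn 2 2)%N = 4%N) //; lra.
    rewrite (_ : minn 0 1 = 0%N) // subr0 subr_le0 ler_nat; exact: geq_minl.
  + by move=> j; rewrite big_bool /= !ffunE.
- move=> x p [[Fx Ex] [p0 [Ut Zx]]] PM.
  have W := Ex _ Fx0.
  rewrite Wx0 /welfare sum_bool xor_true xor_false -natrD ler_nat in W.
  have := Fx tt; rewrite big_bool /= => Ft.
  have [xt xf] : x true tt = 2%N /\ x false tt = 0%N
    by move: W Ft; rewrite /cc; move: (x true tt) (x false tt) => m n; lia.
  have bcap : bundle_le (bn 1) (cap cc) by move=> j; rewrite !ffunE.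
  have := Ut false (bn 1) bcap.
  rewrite !xor_false !price_tt xf !ffunE (_ : minn 1 1 = 1%N) // => hp.
  have p1 : 1 <= p tt.
    move: hp; rewrite mulr0 mulr1 (_ : (minn 0 1 = 0)%N) //; lra.
  have [y [Fy [y0 [Hk Hs]]]] := PM true.
  rewrite !sum_bool !price_tt y0 xt xf ffunE in Hs.
  have [[yz|[amt Hin]] _] := Hk false erefl.
    by rewrite yz ffunE in Hs; move: Hs; rewrite !mulr0; lra.
  move: Hin; rewrite /bids0 inE => /eqP [] yb _.
  by rewrite yb ffunE in Hs; move: Hs; rewrite !mulr0; lra.
Qed.
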